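(* For every integer $n\ge 1$ and every real $y\in[0,1]$, $$\rho(n-y)=\rho(n)+\sum_{j=1}^{n-1}\rho(n-j)\,M_{j,n}(y),$$ where $\rho$ is the Dickman function and $M_{j,n}$ are the multiple polylogarithms defined in the context.
   Context: The Dickman function $\rho:[0,\infty)\to\mathbb{R}$ is the continuous function with $\rho(u)=1$ for $u\in[0,1]$ and $u\rho'(u)=-\rho(u-1)$ for $u>1$. For integers $n>j>0$ and real $y\in[0,1]$ define $$M_{j,n}(y)=\sum_{n_1>n_2>\cdots>n_j>0}\ \prod_{i=1}^{j}\frac{z_i^{n_i}}{n_i},\qquad z_1=\frac{y}{n},\quad z_i=\frac{n+2-i}{n+1-i}\ \text{for } 1<i\le j,$$ the sum running over integers $n_1,\dots,n_j$ (it converges for these parameters). *)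

(* Defs.v *)
From Stdlib Require Import Reals List Arith.
From Coquelicot Require Import Coquelicot.
Open Scope R_scope.

Definition is_dickman (rho : R -> R) : Prop :=
  (forall u, 0 <= u -> filterlim rho (within (fun x => 0 <= x) (locally u)) (locally (rho u)))
  /\ (forall u, 0 <= u <= 1 -> rho u = 1)
  /\ (forall u, 1 < u -> exists d, is_derive rho u d /\ u * d = - rho (u - 1)).

(* nest [z_1; ...; z_k] N = sum over N > n_1 > n_2 > ... > n_k > 0
   of prod_i z_i^{n_i} / n_i  (empty product = 1). *)
Fixpoint nest (zs : list R) (N : nat) : R :=
  match zs with
  | nil => 1
  | z :: zs' => sum_n_m (fun m => z ^ m / INR m * nest zs' m) 1 (N - 1)
  end.

Definition zpar (n : nat) (y : R) (i : nat) : R :=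
  if Nat.eqb i 1 then y / INR n
  else (INR n + 2 - INR i) / (INR n + 1 - INR i).

(* M_{j,n}(y): the (convergent, nonnegative-term) multiple series, as the limit
   of its partial sums over n_1 < N. *)
Definition M (j n : nat) (y : R) : R :=
  real (Lim_seq (fun N => nest (map (zpar n y) (seq 1 j)) N)).

(* Main.v *)
Require Import Defs.
From Stdlib Require Import Reals List Arith Lia Lra.
From Coquelicot Require Import Coquelicot.
Open Scope R_scope.

Definition T (j n : nat) : list R := map (zpar n 0) (seq 2 (j-1)).
Definition cf j n m := nest (T j n) m.
Definition e j n m := (/ INR n)^m * cf j n m.
Definition a j n m := / INR m * e j n m.

Lemma T_1 n : T 1 n = nil.
Proof. reflexivity. Qed.

Lemma map_seq1 n y j : (1<=j)%nat -> map (zpar n y) (seq 1 j) = (y / INR n) :: T j n.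
Proof.
  intros Hj. destruct j as [|j]; [lia|]. simpl. unfold T. replace (S j - 1)%nat with j by lia.
  f_equal. apply map_ext_in. intros i Hi. apply in_seq in Hi.
  unfold zpar. destruct (Nat.eqb_spec i 1); [lia|]. reflexivity.
Qed.

Lemma T_S j n : (1<=j)%nat -> (2<=n)%nat -> T (S j) n = (INR n / INR (n-1)) :: T j (n-1).
Proof.
  intros Hj Hn. unfold T. destruct j as [|j]; [lia|].
  replace (S (S j) - 1)%nat with (S j) by lia. replace (S j - 1)%nat with j by lia.
  simpl. f_equal.
  - unfold zpar. simpl Nat.eqb. cbv iota. rewrite minus_INR by lia. simpl INR. field.
    assert (INR n >= 2). { replace 2 with (INR 2) by (simpl; lra). apply Rle_ge, le_INR. lia. }
    lra.
  - rewrite <- seq_shift, map_map. apply map_ext_in. intros i Hi. apply in_seq in Hi.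
    unfold zpar. destruct (Nat.eqb_spec (S i) 1); [lia|]. destruct (Nat.eqb_spec i 1); [lia|].
    rewrite minus_INR by lia. rewrite S_INR. simpl INR. f_equal; lra.
Qed.

Lemma sum_geom_le s : 1 < s -> forall K, sum_n_m (fun m => s^m) 0 K <= s^(S K)/(s-1).
Proof.
  intros Hs K. induction K.
  - rewrite sum_n_n. simpl. apply (Rmult_le_reg_r (s-1)); [lra|]. field_simplify; lra.
  - rewrite sum_n_Sm by lia. unfold plus; simpl.
    apply (Rmult_le_reg_r (s-1)); [lra|].
    apply (Rmult_le_compat_r (s-1)) in IHK; [|lra].
    replace (s ^ S (S K) / (s - 1) * (s - 1)) with (s^(S (S K))) by (field; lra).
    replace (s ^ (S K) / (s - 1) * (s - 1)) with (s^(S K)) in IHK by (field; lra).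
    rewrite Rmult_plus_distr_r. simpl in *. replace (s * (s * s ^ K) / (s - 1) * (s - 1)) with (s * (s * s ^ K)) by (field; lra). set (t := s ^ K) in *. nra.
Qed.

Lemma sum_nonneg f m k : (forall i, 0 <= f i) -> 0 <= sum_n_m f m k.
Proof.
  intros H. eapply Rle_trans; [|apply (sum_n_m_le (fun _ => 0))]; [|exact H].
  rewrite sum_n_m_const. lra.
Qed.

Lemma Rinv_INR_le1 m : 0 <= / INR m <= 1.
Proof.
  destruct m. simpl. rewrite Rinv_0. lra.
  rewrite S_INR. pose proof (pos_INR m). split.
  left; apply Rinv_0_lt_compat; lra.
  rewrite <- Rinv_1. apply Rinv_le_contravar; lra.
Qed.

Lemma bound j : (1<=j)%nat -> forall n, (j+1<=n)%nat -> exists B, 0 <= B /\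
  forall m, 0 <= cf j n m /\ e j n m <= B * (/(INR n + 1 - INR j))^m.
Proof.
  induction j as [|j IH]; intros Hj n Hn; [lia|].
  destruct (Nat.eq_dec j 0) as [->|Hj0].
  - exists 1. split; [lra|]. intros m. unfold e, cf. rewrite T_1. simpl nest.
    split; [lra|]. simpl INR. replace (INR n + 1 - 1) with (INR n) by ring. lra.
  - destruct (IH ltac:(lia) (n-1)%nat ltac:(lia)) as [B [HB Hb]].
    assert (HN : INR n >= 2 + INR j).
    { replace (2 + INR j) with (INR (S (S j))) by (rewrite !S_INR; ring). apply Rle_ge, le_INR; lia. }
    assert (Hj1 : INR j >= 1). { replace 1 with (INR 1) by reflexivity. apply Rle_ge, le_INR; lia. }
    rewrite minus_INR in Hb by lia. simpl INR in Hb.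
    replace (INR n - 1 + 1 - INR j) with (INR n - INR j) in Hb by ring.
    set (d := INR n - INR j) in *. set (s := INR n / d).
    assert (Hs : 1 < s). { unfold s. apply (Rmult_lt_reg_r d); [unfold d; lra|].
      unfold Rdiv. rewrite Rmult_assoc, Rinv_l by (unfold d; lra). unfold d; lra. }
    exists (B / (s - 1)). split. { apply Rdiv_le_0_compat; lra. }
    assert (Hterm : forall m, 0 <= (INR n / INR (n - 1)) ^ m / INR m * nest (T j (n - 1)) m
               <= B * s^m).
    { intros m. destruct (Hb m) as [Hc He]. unfold e, cf in Hc, He.
      pose proof (Rinv_INR_le1 m).
      rewrite minus_INR by lia. simpl INR.
      assert (Hn1 : INR n - 1 > 0) by lra.
      replace ((INR n / (INR n - 1)) ^ m / INR m * nest (T j (n - 1)) m) with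
        (/ INR m * (INR n ^ m * ((/ (INR n - 1))^m * nest (T j (n - 1)) m))).
      2:{ unfold Rdiv. rewrite Rpow_mult_distr. ring. }
      rewrite minus_INR in He by lia. simpl INR in He.
      assert (0 <= (/ (INR n - 1))^m * nest (T j (n - 1)) m).
      { apply Rmult_le_pos; auto. apply pow_le. left; apply Rinv_0_lt_compat; lra. }
      assert (0 <= INR n ^ m) by (apply pow_le; lra).
      split. { apply Rmult_le_pos; [lra|]. apply Rmult_le_pos; lra. }
      replace (B * s^m) with (1 * (INR n ^ m * (B * (/d)^m))).
      2:{ unfold s. unfold Rdiv. rewrite Rpow_mult_distr. ring. }
      apply Rmult_le_compat; try lra. apply Rmult_le_pos; lra.
      apply Rmult_le_compat_l; lra. }
    intros m. unfold e, cf. rewrite T_S by lia. simpl nest.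
    split. { apply sum_nonneg. intros i; apply Hterm. }
    assert (Hsum : sum_n_m (fun m0 => (INR n / INR (n - 1)) ^ m0 / INR m0 * nest (T j (n - 1)) m0) 1 (m-1)
                   <= B * (s^m / (s-1))).
    { eapply Rle_trans. apply (sum_n_m_le _ (fun i => B * s^i)). intros; apply Hterm.
      rewrite (sum_n_m_mult_l B (fun i => s^i)). unfold mult; simpl. apply Rmult_le_compat_l; [lra|].
      destruct m as [|m]. { rewrite sum_n_m_zero by lia. unfold zero; simpl.
        apply Rdiv_le_0_compat; [lra|lra]. }
      replace (S m - 1)%nat with m by lia.
      eapply Rle_trans; [|apply sum_geom_le; lra].
      destruct m. { rewrite sum_n_m_zero by lia. unfold zero; simpl. rewrite sum_n_n. simpl; lra. }
      rewrite (sum_Sn_m _ 0) by lia. unfold plus; simpl. match goal with |- ?x <= 1 + ?y => replace x with y by reflexivity end. lra. }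
    rewrite S_INR. replace (INR n + 1 - (INR j + 1)) with d by (unfold d; ring).
    assert (0 <= (/ INR n)^m) by (apply pow_le; left; apply Rinv_0_lt_compat; lra).
    eapply Rle_trans. apply Rmult_le_compat_l; [lra|exact Hsum].
    right. replace (s^m) with (INR n^m * (/d)^m) by (unfold s, Rdiv; symmetry; apply Rpow_mult_distr).
    replace ((/INR n)^m * (B * (INR n ^ m * (/ d) ^ m / (s - 1)))) with (((/INR n) * INR n)^m * (B * ((/d)^m/(s-1)))) by (rewrite Rpow_mult_distr; field; lra).
    rewrite Rinv_l, pow1 by lra. field; lra.
Qed.

Lemma radius j n : (1<=j)%nat -> (j+1<=n)%nat ->
  Rbar_le (INR n + 1 - INR j) (CV_radius (a j n)).
Proof.
  intros Hj Hn. destruct (bound j Hj n Hn) as [B [HB Hb]].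
  destruct (CV_radius_bounded (a j n)) as [Hub _]. apply Hub.
  assert (HN : INR n >= 1 + INR j).
  { replace (1 + INR j) with (INR (S j)) by (rewrite S_INR; ring). apply Rle_ge, le_INR; lia. }
  assert (Hj1 : INR j >= 1). { replace 1 with (INR 1) by reflexivity. apply Rle_ge, le_INR; lia. }
  set (d := INR n + 1 - INR j).
  exists B. intros m. destruct (Hb m) as [Hc He]. fold d in He.
  pose proof (Rinv_INR_le1 m).
  assert (0 <= e j n m). { unfold e. apply Rmult_le_pos; auto. apply pow_le. left; apply Rinv_0_lt_compat; lra. }
  assert (0 < d ^ m) by (apply pow_lt; unfold d; lra).
  unfold a. rewrite Rabs_pos_eq by (apply Rmult_le_pos; [apply Rmult_le_pos|]; lra).
  apply Rle_trans with (1 * e j n m * d^m).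
  { apply Rmult_le_compat_r; [lra|]. apply Rmult_le_compat_r; lra. }
  apply Rle_trans with (B * (/d)^m * d^m). { apply Rmult_le_compat_r; lra. }
  rewrite Rmult_assoc, <- Rpow_mult_distr, Rinv_l, pow1 by (unfold d; lra). lra.
Qed.

Lemma radius_lt j n y : (1<=j)%nat -> (j+1<=n)%nat -> Rabs y < INR n + 1 - INR j ->
  Rbar_lt (Rabs y) (CV_radius (a j n)).
Proof.
  intros. eapply Rbar_lt_le_trans; [|apply radius; auto]. simpl. auto.
Qed.

Lemma Mrep j n y : (1<=j)%nat -> M j n y = PSeries (a j n) y.
Proof.
  intros Hj. unfold M. rewrite map_seq1 by auto.
  rewrite <- Lim_seq_incr_1. unfold PSeries, Series. f_equal. apply Lim_seq_ext. intros K.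
  replace (S K - 1)%nat with K by lia. simpl nest. replace (S K - 1)%nat with K by lia.
  rewrite Nat.sub_0_r. unfold sum_n. rewrite (sum_Sn_m _ 0) by lia. unfold plus; simpl.
  replace (a j n 0 * 1) with 0 by (unfold a; simpl INR; rewrite Rinv_0; ring). rewrite Rplus_0_l.
  assert (Heq : forall m, (y / INR n) ^ m / INR m * nest (T j n) m = a j n m * y ^ m).
  { intros m. unfold a, e, cf. unfold Rdiv. rewrite Rpow_mult_distr. ring. }
  apply sum_n_m_ext. exact Heq.
Qed.

Lemma ex_series_ext_R (f g : nat -> R) : (forall n, f n = g n) -> ex_series f -> ex_series g.
Proof. apply ex_series_ext. Qed.

Lemma core (a' e' : nat -> R) N y : (forall m, a' m = / INR m * e' m) ->
  Rbar_lt (Rabs y) (CV_radius a') ->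
  (N - y) * PSeries (PS_derive a') y = e' 0%nat + Series (fun K => (N * e' (S K) - e' K) * y^K).
Proof.
  intros Ha Hr.
  assert (Hd : forall K, PS_derive a' K * y^K = e' (S K) * y^K).
  { intros K. unfold PS_derive. rewrite Ha. field. rewrite S_INR. pose proof (pos_INR K). lra. }
  assert (ex1 : ex_series (fun K => e' (S K) * y^K)).
  { apply (ex_series_ext_R (fun K => PS_derive a' K * y^K)); [exact Hd|].
    apply ex_pseries_R. apply ex_pseries_derive. exact Hr. }
  assert (ex1' : ex_series (fun K => N * (e' (S K) * y^K))).
  { apply (ex_series_ext_R (fun K => (e' (S K) * y^K) * N)); [intros; ring|].
    apply ex_series_scal_r. exact ex1. }
  assert (ex2 : ex_series (fun K => e' K * y^K)).
  { apply ex_series_incr_1.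
    apply (ex_series_ext_R (fun K => (e' (S K) * y^K) * y)).
    { intros K. simpl. ring. }
    apply ex_series_scal_r. exact ex1. }
  assert (HP : PSeries (PS_derive a') y = Series (fun K => e' (S K) * y^K)).
  { unfold PSeries. apply Series_ext. exact Hd. }
  rewrite HP.
  rewrite (Series_ext (fun K => (N * e' (S K) - e' K) * y^K) (fun K => N * (e' (S K) * y^K) - e' K * y^K)) by (intros; ring).
  rewrite Series_minus by auto. rewrite Series_scal_l.
  rewrite (Series_incr_1 (fun K => e' K * y^K)) by auto.
  rewrite (Series_ext (fun k => e' (S k) * y^(S k)) (fun k => y * (e' (S k) * y^k))) by (intros; simpl; ring).
  rewrite Series_scal_l. simpl. ring.
Qed.

Lemma Series_zero (f : nat -> R) : (forall k, f k = 0) -> Series f = 0.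
Proof.
  intros H. rewrite (Series_ext f (fun k => 0 * f k)) by (intros; rewrite H; ring).
  rewrite Series_scal_l. ring.
Qed.

Lemma rel1 n y : (2<=n)%nat -> Rabs y < INR n ->
  (INR n - y) * PSeries (PS_derive (a 1 n)) y = 1.
Proof.
  intros Hn Hy.
  assert (HN : INR n >= 2). { replace 2 with (INR 2) by (simpl; lra). apply Rle_ge, le_INR; lia. }
  rewrite (core (a 1 n) (e 1 n)).
  - rewrite Series_zero. unfold e, cf. rewrite T_1. simpl. ring.
    intros K. unfold e, cf. rewrite T_1. simpl nest. simpl pow. field. lra.
  - reflexivity.
  - apply radius_lt; try lia. simpl INR. lra.
Qed.

Lemma cf_S j n K : (1<=j)%nat -> (2<=n)%nat ->
  cf (S j) n (S K) = cf (S j) n K + (INR n / INR (n-1))^K / INR K * cf j (n-1) K.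
Proof.
  intros Hj Hn. unfold cf. rewrite T_S by auto. simpl nest. rewrite Nat.sub_0_r.
  destruct K.
  - replace (0 - 1)%nat with 0%nat by lia. rewrite sum_n_m_zero by lia. change (INR 0) with 0. unfold Rdiv. rewrite Rinv_0. unfold zero; simpl. ring.
  - replace (S K - 1)%nat with K by lia. rewrite sum_n_Sm by lia. reflexivity.
Qed.

Lemma relS j n y : (1<=j)%nat -> (j+2<=n)%nat -> Rabs y < INR n - INR j ->
  (INR n - y) * PSeries (PS_derive (a (S j) n)) y = M j (n-1) y.
Proof.
  intros Hj Hn Hy.
  assert (HN : INR n >= 2 + INR j).
  { replace (2 + INR j) with (INR (S (S j))) by (rewrite !S_INR; ring). apply Rle_ge, le_INR; lia. }
  assert (Hj1 : INR j >= 1). { replace 1 with (INR 1) by reflexivity. apply Rle_ge, le_INR; lia. }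
  assert (Hn1 : INR (n-1) = INR n - 1) by (rewrite minus_INR by lia; reflexivity).
  rewrite (core (a (S j) n) (e (S j) n)).
  - rewrite Mrep by auto. unfold PSeries.
    replace (e (S j) n 0) with 0.
    2:{ unfold e, cf. rewrite T_S by lia. simpl nest. rewrite sum_n_m_zero by lia. unfold zero; simpl. ring. }
    rewrite Rplus_0_l. apply Series_ext. intros K. f_equal.
    unfold e, a, e. rewrite cf_S by lia. rewrite Hn1. unfold Rdiv.
    rewrite Rpow_mult_distr, !pow_inv. simpl pow.
    assert (INR n ^ K <> 0) by (apply pow_nonzero; lra).
    assert ((INR n - 1) ^ K <> 0) by (apply pow_nonzero; lra).
    generalize (/ INR K); intros t. field. repeat split; lra.
  - reflexivity.
  - apply radius_lt; try lia. rewrite S_INR. lra.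
Qed.

Lemma is_derive_sum (f : nat -> R -> R) (df : nat -> R) x m :
  (forall j, (1<=j<=m)%nat -> is_derive (f j) x (df j)) ->
  is_derive (fun x => sum_n_m (fun j => f j x) 1 m) x (sum_n_m df 1 m).
Proof.
  induction m; intros H.
  - replace (sum_n_m df 1 0) with 0 by (rewrite sum_n_m_zero by lia; reflexivity).
    apply (is_derive_ext (fun _ => 0)). { intros t. rewrite sum_n_m_zero by lia. reflexivity. }
    apply (is_derive_const (K := R_AbsRing) (V := R_NormedModule) 0 x).
  - rewrite sum_n_Sm by lia. change (plus (sum_n_m df 1 m) (df (S m))) with (sum_n_m df 1 m + df (S m)).
    apply (is_derive_ext (fun x => sum_n_m (fun j => f j x) 1 m + f (S m) x)).
    { intros t. rewrite sum_n_Sm by lia. reflexivity. }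
    apply (is_derive_plus (K:=R_AbsRing) (V:=R_NormedModule)). apply IHm. intros; apply H; lia. apply H; lia.
Qed.

Definition Fn (rho : R -> R) n y :=
  rho (INR n) + sum_n_m (fun j => rho (INR n - INR j) * PSeries (a j n) y) 1 (n-1).

Lemma Fn_derive rho n y : (1 <= n)%nat -> Rabs y < 2 ->
  is_derive (Fn rho n) y (sum_n_m (fun j => rho (INR n - INR j) * PSeries (PS_derive (a j n)) y) 1 (n-1)).
Proof.
  intros Hn Hy. unfold Fn.
  replace (sum_n_m (fun j => rho (INR n - INR j) * PSeries (PS_derive (a j n)) y) 1 (n-1))
    with (0 + (sum_n_m (fun j => rho (INR n - INR j) * PSeries (PS_derive (a j n)) y) 1 (n-1)))
    by ring.
  apply (is_derive_plus (K:=R_AbsRing) (V:=R_NormedModule)).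
  apply (is_derive_const (K := R_AbsRing) (V := R_NormedModule)).
  apply (is_derive_sum (fun j y => rho (INR n - INR j) * PSeries (a j n) y)).
  intros j Hj. apply is_derive_scal. apply is_derive_PSeries. apply radius_lt; try lia.
  assert (INR n >= 1 + INR j).
  { replace (1 + INR j) with (INR (S j)) by (rewrite S_INR; ring). apply Rle_ge, le_INR; lia. }
  lra.
Qed.

Lemma rho_cont rho : is_dickman rho -> forall u, 0 < u -> continuity_pt rho u.
Proof.
  intros [Hc _] u Hu. apply continuity_pt_filterlim.
  intros P HP. specialize (Hc u (Rlt_le _ _ Hu) P HP).
  assert (Hl : locally u (fun x => 0 <= x)).
  { apply (locally_interval _ u 0 p_infty); simpl; auto. intros; lra. }
  unfold filtermap, within in Hc. unfold filtermap. generalize (filter_and _ _ Hc Hl). apply filter_imp. intros x [H1 H2]. apply H1. exact H2.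
Qed.

Lemma plus_R (x y : R) : plus x y = x + y.
Proof. reflexivity. Qed.

Lemma is_derive_eq (f : R -> R) x l1 l2 : is_derive f x l1 -> l1 = l2 -> is_derive f x l2.
Proof. intros H ->. exact H. Qed.

Lemma cont_of_derive (f : R -> R) x l : is_derive f x l -> continuity_pt f x.
Proof. intros H. apply continuity_pt_filterlim. apply (ex_derive_continuous f x). exists l. exact H. Qed.

Lemma sum_R_zero (f : nat -> R) m k : (forall i, f i = 0) -> sum_n_m f m k = 0.
Proof. intros H. transitivity (@sum_n_m R_AbelianMonoid (fun _ => zero) m k). apply sum_n_m_ext. exact H. exact (@sum_n_m_const_zero R_AbelianMonoid m k). Qed.

Lemma sum_mult_R (c : R) (f : nat -> R) m k : c * sum_n_m f m k = sum_n_m (fun i => c * f i) m k.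
Proof. symmetry. apply (sum_n_m_mult_l c f m k). Qed.

Lemma step (rho : R -> R) (Hrho : is_dickman rho) p :
  (forall y, 0 <= y <= 1 -> rho (INR (S p) - y) =
     rho (INR (S p)) + sum_n_m (fun j => rho (INR (S p) - INR j) * M j (S p) y) 1 (S p - 1)) ->
  forall y, 0 <= y <= 1 -> rho (INR (S (S p)) - y) = Fn rho (S (S p)) y.
Proof.
  intros IH y Hy.
  set (n := S (S p)). set (N := INR n).
  assert (HN : N = INR (S p) + 1) by (unfold N, n; rewrite S_INR; reflexivity).
  assert (Hp1 : INR (S p) >= 1). { rewrite S_INR. pose proof (pos_INR p). lra. }
  set (H := fun y => rho (N - y) - Fn rho n y).
  assert (Hlin : forall t, is_derive (fun y => N - y) t (-1)).
  { intros t. auto_derive; auto. }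
  assert (Hder : forall t, 0 < t < 1 -> is_derive H t 0).
  { intros t Ht.
    destruct (proj2 (proj2 Hrho) (N - t) ltac:(lra)) as [d [Hd Hud]].
    pose proof (is_derive_comp rho (fun y => N - y) t d (-1) Hd (Hlin t)) as HG.
    pose proof (Fn_derive rho n t ltac:(unfold n; lia) ltac:(rewrite Rabs_pos_eq; lra)) as HF.
    set (F' := sum_n_m (fun j => rho (INR n - INR j) * PSeries (PS_derive (a j n)) t) 1 (n - 1)) in HF.
    apply (is_derive_eq _ _ _ _ (is_derive_minus _ _ t _ _ HG HF)).
    assert (Key : (N - t) * F' = rho (INR (S p) - t)).
    { rewrite (IH t) by lra. unfold F'. rewrite sum_mult_R.
      replace (n - 1)%nat with (S p) by (unfold n; lia).
      rewrite sum_Sn_m by lia. rewrite plus_R.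
      f_equal.
      - fold N. rewrite Rmult_comm, Rmult_assoc, (Rmult_comm _ (N - t)).
        unfold N. rewrite rel1. rewrite Rmult_1_r. f_equal. unfold n. rewrite (S_INR (S p)). change (INR 1) with 1. ring.
        unfold n; lia. rewrite Rabs_pos_eq by lra. fold N. lra.
      - rewrite <- sum_n_m_S. replace (S p - 1)%nat with p by lia.
        apply sum_n_m_ext_loc. intros k Hk.
        rewrite Rmult_comm, Rmult_assoc, (Rmult_comm _ (INR n - t)).
        rewrite relS.
        + replace (n - 1)%nat with (S p) by (unfold n; lia). f_equal. f_equal.
          unfold n. rewrite (S_INR (S p)), (S_INR k). ring.
        + lia.
        + unfold n; lia.
        + rewrite Rabs_pos_eq by lra. assert (INR k <= INR p) by (apply le_INR; lia).
          fold N. rewrite HN. rewrite S_INR. lra. }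
    unfold minus, plus, opp, scal; simpl. unfold mult; simpl.
    assert (Hnt : N - t <> 0) by lra.
    apply (Rmult_eq_reg_l (N - t)); [|exact Hnt].
    replace ((N - t) * (-1 * d + - F')) with (- ((N - t) * d) - (N - t) * F') by ring.
    rewrite Key, Hud. replace (N - t - 1) with (INR (S p) - t) by lra. ring. }
  assert (Hcont : forall t, 0 <= t <= 1 -> continuity_pt H t).
  { intros t Ht. unfold H. apply (continuity_pt_minus (fun y => rho (N - y)) (Fn rho n)).
    - apply (continuity_pt_comp (fun y => N - y) rho).
      + exact (cont_of_derive _ _ _ (Hlin t)).
      + apply rho_cont; auto. lra.
    - eapply cont_of_derive. apply Fn_derive. unfold n; lia. rewrite Rabs_pos_eq; lra. }
  destruct (MVT_gen H 0 y (fun _ => 0)) as [c [_ Hc]].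
  - rewrite Rmin_left, Rmax_right by lra. intros t Ht. apply Hder. lra.
  - rewrite Rmin_left, Rmax_right by lra. intros t Ht. apply Hcont. lra.
  - assert (H0 : H 0 = 0).
    { unfold H, Fn. rewrite sum_R_zero. fold N. rewrite Rminus_0_r. ring.
      intros i. rewrite PSeries_0. unfold a. simpl INR. rewrite Rinv_0. ring. }
    rewrite H0 in Hc. unfold H in Hc. fold N. lra.
Qed.

Theorem theorem1 (rho : R -> R) (Hrho : is_dickman rho) (n : nat) (y : R) :
  (1 <= n)%nat -> 0 <= y <= 1 ->
  rho (INR n - y) =
  rho (INR n) + sum_n_m (fun j => rho (INR n - INR j) * M j n y) 1 (n - 1).
Proof.
  intros Hn. destruct n as [|p]; [lia|]. clear Hn. revert y. induction p as [|p IH]; intros y Hy.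
  - rewrite sum_n_m_zero by lia. change (INR 1) with 1.
    destruct Hrho as [_ [H1 _]]. rewrite !H1 by lra. unfold zero; simpl. ring.
  - rewrite (step rho Hrho p IH y Hy). unfold Fn. f_equal.
    apply sum_n_m_ext_loc. intros k Hk. rewrite Mrep by lia. reflexivity.
Qed.
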